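(* Let $\Delta_0, \ldots, \Delta_n$ be a sequence of positive integers with $n \geq 1$. Then there exist indices $\alpha, \beta \in \{0,1,\ldots,n\}$ such that: (1) $\alpha < \beta$; (2) $\Delta_j > \max(\Delta_\alpha, \Delta_\beta)$ for every $j \in \{0,\ldots,\alpha-1\} \cup \{\beta+1,\ldots,n\}$; (3) the inequality $\Delta_t < \max(\Delta_\alpha,\Delta_\beta)$ holds for at most one index $t \in \{\alpha, \alpha+1, \ldots, \beta\}$. *)

(* Defs.v *)
From Stdlib Require Import Arith Lia.

(* Main.v *)
Require Import Defs.
From Stdlib Require Import Arith Lia Classical Wf_nat.

Lemma least_ex (P : nat -> Prop) m : P m -> exists k, P k /\ forall j, j < k -> ~ P j.
Proof.
  induction m as [m IH] using (well_founded_induction lt_wf). intros Hm.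
  destruct (classic (exists j, j < m /\ P j)) as [[j [Hj Pj]]|H].
  - exact (IH j Hj Pj).
  - exists m; split; auto. intros j Hj Pj; apply H; eauto.
Qed.

Theorem lemma2p8 (n : nat) (Delta : nat -> nat)
  (Hn : 1 <= n) (Hpos : forall i, i <= n -> 0 < Delta i) :
  exists alpha beta : nat,
    alpha < beta /\ beta <= n /\
    (forall j, (j < alpha \/ (beta < j /\ j <= n)) ->
        Delta j > Nat.max (Delta alpha) (Delta beta)) /\
    (forall t1 t2,
        alpha <= t1 <= beta -> Delta t1 < Nat.max (Delta alpha) (Delta beta) ->
        alpha <= t2 <= beta -> Delta t2 < Nat.max (Delta alpha) (Delta beta) ->
        t1 = t2).
Proof.
  set (P := fun m => exists i j, i < j /\ j <= n /\ Delta i <= m /\ Delta j <= m).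
  assert (P0 : P (Nat.max (Delta 0) (Delta 1))).
  { exists 0, 1; repeat split; lia. }
  destruct (least_ex P _ P0) as [M [[i [j [Hij [Hjn [Hi Hj]]]]] HM]].
  destruct (least_ex (fun a => a <= n /\ Delta a <= M) i) as [a [[Han Ha] Hamin]].
  { split; lia. }
  destruct (least_ex (fun k => k <= n /\ Delta (n - k) <= M) (n - j)) as [k [[Hkn Hk] Hkmin]].
  { split; [lia|]. replace (n - (n - j)) with j by lia; auto. }
  assert (Hai : a <= i).
  { destruct (Nat.le_gt_cases a i) as [h|h]; auto. exfalso; apply (Hamin i h); split; lia. }
  assert (Hkj : k <= n - j).
  { destruct (Nat.le_gt_cases k (n - j)) as [h|h]; auto. exfalso.
    apply (Hkmin (n - j) h); split; [lia|]. replace (n - (n - j)) with j by lia; auto. }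
  assert (HMeq : Nat.max (Delta a) (Delta (n - k)) = M).
  { assert (HP : P (Nat.max (Delta a) (Delta (n - k)))).
    { exists a, (n - k); repeat split; lia. }
    destruct (Nat.lt_ge_cases (Nat.max (Delta a) (Delta (n - k))) M) as [h|h].
    - exfalso; exact (HM _ h HP).
    - lia. }
  exists a, (n - k). rewrite HMeq. repeat split; try lia.
  - intros x [Hx|[Hx Hxn]].
    + destruct (Nat.le_gt_cases (Delta x) M) as [h|h]; auto.
      exfalso; apply (Hamin x Hx); split; lia.
    + destruct (Nat.le_gt_cases (Delta x) M) as [h|h]; auto.
      exfalso; apply (Hkmin (n - x)); [lia|]. split; [lia|].
      replace (n - (n - x)) with x by lia; auto.
  - intros t1 t2 B1 H1 B2 H2.
    destruct (Nat.lt_trichotomy t1 t2) as [h|[h|h]]; auto; exfalso.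
    + apply (HM (M - 1)); [lia|]. exists t1, t2; repeat split; lia.
    + apply (HM (M - 1)); [lia|]. exists t2, t1; repeat split; try lia.
Qed.
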